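(* Let $\nu>\tfrac14$ and $\kappa>0$. Let $g_k, g_{k+1}, d_k\in\mathbb{R}^n$ with $g_k\neq 0$ and $d_k\neq 0$. Define $$\beta_k=\min\Big\{\frac{\big\langle g_{k+1},\, g_{k+1}-g_k-\frac{\nu\|g_{k+1}-g_k\|_2^2}{\|g_k\|_2^2}\,d_k\big\rangle_{+}}{\|g_k\|_2^2},\ \frac{\kappa\|g_{k+1}\|_2}{\|d_k\|_2}\Big\},$$ where $t_+=\max\{t,0\}$, and $d_{k+1}=-g_{k+1}+\beta_k d_k$. Then, with $\mu=\frac{4\nu-1}{4\nu(1+\kappa)}$, $$\langle d_{k+1},g_{k+1}\rangle\le -\mu\,\|d_{k+1}\|_2\,\|g_{k+1}\|_2 .$$
   Context: $\langle\cdot,\cdot\rangle$ is the Euclidean inner product and $\|\cdot\|=\|\cdot\|_2$ the Euclidean norm on $\mathbb{R}^n$. *)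

(* Defs.v *)
From mathcomp Require Import all_boot all_order all_algebra.
From mathcomp Require Import reals.
Set Implicit Arguments. Unset Strict Implicit. Unset Printing Implicit Defensive.
Import Order.TTheory GRing.Theory Num.Theory.
Local Open Scope ring_scope.

Definition dotv (R : realType) (n : nat) (u v : 'rV[R]_n) : R :=
  \sum_(i < n) u ord0 i * v ord0 i.

Definition norm2 (R : realType) (n : nat) (u : 'rV[R]_n) : R :=
  Num.sqrt (dotv u u).

Definition pos_part (R : realType) (t : R) : R := Num.max t 0.

(* Main.v *)
Require Import Defs.
From mathcomp Require Import all_boot all_order all_algebra.
From mathcomp Require Import reals.
From mathcomp Require Import lra ring.
Import Order.TTheory GRing.Theory Num.Theory.
Local Open Scope ring_scope.

Section Aux.
Set Implicit Arguments.
Variables (R : realType) (n : nat).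
Implicit Types (u v w : 'rV[R]_n) (a : R).

Lemma dotvC u v : dotv u v = dotv v u.
Proof. by rewrite /dotv; apply: eq_bigr => i _; rewrite mulrC. Qed.

Lemma dotvDl u v w : dotv (u + v) w = dotv u w + dotv v w.
Proof. by rewrite /dotv -big_split; apply: eq_bigr => i _; rewrite mxE mulrDl. Qed.

Lemma dotvZl a u w : dotv (a *: u) w = a * dotv u w.
Proof. by rewrite /dotv mulr_sumr; apply: eq_bigr => i _; rewrite mxE mulrA. Qed.

Lemma dotvNl u w : dotv (- u) w = - dotv u w.
Proof. by rewrite /dotv -sumrN; apply: eq_bigr => i _; rewrite mxE mulNr. Qed.

Lemma dotvDr u v w : dotv w (u + v) = dotv w u + dotv w v.
Proof. by rewrite !(dotvC w) dotvDl. Qed.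

Lemma dotvZr a u w : dotv w (a *: u) = a * dotv w u.
Proof. by rewrite !(dotvC w) dotvZl. Qed.

Lemma dotvNr u w : dotv w (- u) = - dotv w u.
Proof. by rewrite !(dotvC w) dotvNl. Qed.

Lemma dotv_ge0 u : 0 <= dotv u u.
Proof. by apply: sumr_ge0 => i _; rewrite -expr2 sqr_ge0. Qed.

Lemma dotv_eq0 u : dotv u u = 0 -> u = 0.
Proof.
move=> /eqP; rewrite psumr_eq0; last by move=> i _; rewrite -expr2 sqr_ge0.
move=> /allP H; apply/rowP => i; rewrite mxE.
have := H i (mem_index_enum i); rewrite implyTb mulf_eq0 orbb.
by move=> /eqP; rewrite (ord1 ord0).
Qed.


Lemma norm2_sq u : norm2 u ^+ 2 = dotv u u.
Proof. by rewrite /norm2 sqr_sqrtr // dotv_ge0. Qed.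

Lemma norm2_ge0 u : 0 <= norm2 u.
Proof. exact: sqrtr_ge0. Qed.

Lemma norm2N u : norm2 (- u) = norm2 u.
Proof. by rewrite /norm2 dotvNl dotvNr opprK. Qed.

Lemma CS u v : dotv u v <= norm2 u * norm2 v.
Proof.
set a := norm2 v; set b := norm2 u.
have Ha : a ^+ 2 = dotv v v by exact: norm2_sq.
have Hb : b ^+ 2 = dotv u u by exact: norm2_sq.
have a0 : 0 <= a by exact: norm2_ge0.
have b0 : 0 <= b by exact: norm2_ge0.
have := dotv_ge0 (a *: u - b *: v).
rewrite !(dotvDl, dotvDr, dotvZl, dotvZr, dotvNl, dotvNr) (dotvC v u) -Ha -Hb => H.
have [a00|apos] := eqVneq a 0.
  have v0 : v = 0 by apply: dotv_eq0; rewrite -Ha a00 expr0n.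
  by rewrite a00 mulr0 v0 /dotv big1 // => i _; rewrite mxE mulr0.
have [b00|bpos] := eqVneq b 0.
  have u0 : u = 0 by apply: dotv_eq0; rewrite -Hb b00 expr0n.
  by rewrite b00 mul0r u0 /dotv big1 // => i _; rewrite mxE mul0r.
have ab : 0 < a * b by rewrite mulr_gt0 // lt_def ?apos ?bpos.
have H2 : (a * b) * dotv u v <= (a * b) * (b * a) by nra.
rewrite ler_pM2l // in H2; rewrite /a /b in H2 *; lra.
Qed.

Lemma dotv_sqB a u v : dotv (u - a *: v) (u - a *: v) =
  dotv u u - 2 * a * dotv u v + a ^+ 2 * dotv v v.
Proof.
rewrite !(dotvDl, dotvDr, dotvZl, dotvZr, dotvNl, dotvNr) (dotvC v u); ring.
Qed.

Lemma CSN u v : - dotv u v <= norm2 u * norm2 v.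
Proof. by rewrite -dotvNl -(norm2N u) CS. Qed.

End Aux.
Arguments dotvC {R n}.
Arguments dotvDl {R n}.
Arguments dotvZl {R n}.
Arguments dotvNl {R n}.
Arguments dotvDr {R n}.
Arguments dotvZr {R n}.
Arguments dotvNr {R n}.
Arguments dotv_ge0 {R n}.
Arguments dotv_eq0 {R n}.
Arguments norm2_sq {R n}.
Arguments norm2_ge0 {R n}.
Arguments norm2N {R n}.
Arguments CS {R n}.
Arguments CSN {R n}.
Arguments dotv_sqB {R n}.

Theorem lemma1 (R : realType) (n : nat) (nu kappa : R)
  (gk gk1 dk : 'rV[R]_n) :
  1 / 4 < nu -> 0 < kappa ->
  gk != 0 -> dk != 0 ->
  let y := gk1 - gk in
  let betak :=
    Num.min
      (pos_part (dotv gk1 (y - (nu * norm2 y ^+ 2 / norm2 gk ^+ 2) *: dk))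
         / norm2 gk ^+ 2)
      (kappa * norm2 gk1 / norm2 dk) in
  let dk1 := - gk1 + betak *: dk in
  let mu := (4 * nu - 1) / (4 * nu * (1 + kappa)) in
  dotv dk1 gk1 <= - mu * norm2 dk1 * norm2 gk1.
Proof.
move=> Hnu Hk Hg Hd; cbv zeta.
set y := gk1 - gk.
set betak := Num.min _ _.
set dk1 := - gk1 + _.
set mu := (4 * nu - 1) / _.
set G := norm2 gk ^+ 2.
set Y := norm2 y ^+ 2.
set s := norm2 gk1.
set t := norm2 dk.
set c := nu * Y / G.
set X := dotv gk1 (y - c *: dk).
set P := dotv gk1 gk1.
set p := dotv dk gk1.
set q := dotv gk1 y.
set D := dotv dk dk.
have HP : P = s ^+ 2 by rewrite norm2_sq.
have HD : D = t ^+ 2 by rewrite norm2_sq.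
have s0 : 0 <= s by exact: norm2_ge0.
have t0 : 0 <= t by exact: norm2_ge0.
have Gpos : 0 < G.
  rewrite /G norm2_sq lt_def dotv_ge0 andbT; apply/eqP => /dotv_eq0 H.
  by rewrite H eqxx in Hg.
have tpos : 0 < t.
  rewrite lt_def t0 andbT; apply/eqP => H0.
  have : D = 0 by rewrite HD H0 expr0n.
  by move/dotv_eq0 => H; rewrite H eqxx in Hd.
have HX : X = q - c * p.
  by rewrite /X dotvDr dotvNr dotvZr /p (dotvC gk1 dk).
have b0 : 0 <= betak.
  rewrite /betak le_min; apply/andP; split.
    apply: divr_ge0; last by apply: ltW.
    by rewrite /pos_part le_max lexx orbT.
  by apply: divr_ge0 => //; apply: mulr_ge0 => //; apply: ltW.
have b1 : betak * t <= kappa * s.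
  have : betak <= kappa * s / t by rewrite /betak ge_min lexx orbT.
  by rewrite ler_pdivlMr.
have b2 : betak <= pos_part X / G by rewrite /betak ge_min lexx.
have Hd1g : dotv dk1 gk1 = - P + betak * p.
  by rewrite /dk1 dotvDl dotvNl dotvZl.
have Hd1 : dotv dk1 dk1 = P - 2 * betak * p + betak ^+ 2 * D.
  rewrite /dk1 !(dotvDl, dotvDr, dotvZl, dotvZr, dotvNl, dotvNr) -/P -/D.
  rewrite -/p (dotvC gk1 dk) -/p; ring.
have key : 4 * nu * (betak * p) <= P.
  have [pn|pp] := lerP p 0.
    have : betak * p <= 0 by nra.
    have : 0 <= P by rewrite /P dotv_ge0.
    nra.
  have [Xn|Xp] := lerP X 0.
    rewrite /pos_part max_r // mul0r in b2.
    have : betak = 0 by apply/eqP; rewrite eq_le b0 b2.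
    move=> ->; rewrite mul0r mulr0 /P dotv_ge0 //.
  have b3 : pos_part X = X by rewrite /pos_part max_l // ltW.
  rewrite b3 in b2.
  set u := p / G.
  have Hu : X / G * p = X * u by rewrite /u; ring.
  have Hcp : c * p = nu * Y * u by rewrite /c /u; ring.
  have HY : Y = dotv y y by rewrite /Y norm2_sq.
  have sq := dotv_ge0 (gk1 - (2 * nu * u) *: y).
  rewrite dotv_sqB -/P -HY -/q in sq.
  have bp : betak * p <= X * u.
    rewrite -Hu; nra.
  rewrite HX Hcp in bp.
  have nu0 : 0 < nu by lra.
  nra.
set n1 := norm2 dk1.
have n10 : 0 <= n1 by exact: norm2_ge0.
have pbound : - p <= t * s by rewrite /p CSN.
have Hn1 : n1 ^+ 2 <= ((1 + kappa) * s) ^+ 2.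
  rewrite /n1 norm2_sq Hd1 HP HD.
  have : s + betak * t <= (1 + kappa) * s by lra.
  have : 0 <= s + betak * t by nra.
  nra.
have Hn1' : n1 <= (1 + kappa) * s.
  have : 0 <= (1 + kappa) * s by apply: mulr_ge0 => //; lra.
  nra.
have nu0 : 0 < nu by lra.
have Hmu : mu * (4 * nu * (1 + kappa)) = 4 * nu - 1.
  rewrite /mu mulfVK //; apply/lt0r_neq0; apply: mulr_gt0; lra.
have mu0 : 0 <= mu.
  rewrite /mu; apply: divr_ge0; first lra.
  apply: mulr_ge0; lra.
rewrite Hd1g.
have h1 : mu * n1 * s <= mu * ((1 + kappa) * s) * s.
  by apply: ler_wpM2r => //; apply: ler_wpM2l.
have h2 : 4 * nu * (mu * n1 * s) <= (4 * nu - 1) * P.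
  rewrite HP -Hmu.
  have : 4 * nu * (mu * n1 * s) <= 4 * nu * (mu * ((1 + kappa) * s) * s).
    by apply: ler_wpM2l => //; lra.
  move=> h; apply: (le_trans h); rewrite le_eqVlt; apply/orP; left; apply/eqP; ring.
have : 4 * nu * (- P + betak * p) <= 4 * nu * (- mu * n1 * s).
  have -> : 4 * nu * (- mu * n1 * s) = - (4 * nu * (mu * n1 * s)) by ring.
  lra.
by rewrite ler_pM2l //; lra.
Qed.
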